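(* In a qubit stabilizer subsystem code with encoded qubits $\mathcal{H}_e=\bigotimes_{j=1}^{n_L}\mathcal{H}_j$, let $S\subseteq\{1,\dots,n_L\}$ and let $R$ be a region of physical qubits that obeys complementary recovery and is dressed-cleanable with respect to the logical subsystem given by $S$. Then $R$ is correctable with respect to $S$.
   Context: Stabilizer code: abelian subgroup of the Pauli group not containing $-\mathrm{Id}$, code space its $+1$ eigenspace, encoding isometry $V$ from the encoded space $\bigotimes_j\mathcal{H}_j$ of encoded qubits (with a basis such that codespace-preserving physical Paulis implement encoded Paulis); $\Pi=VV^\dagger$. For $S\subseteq\{1,\dots,n_L\}$, the logical subsystem is $\mathcal{H}_L=\bigotimes_{j\in S}\mathcal{H}_j$ and the junk subsystem $\mathcal{H}_J=\bigotimes_{j\notin S}\mathcal{H}_j$. $A$ is CSP if $[A,\Pi]=0$; dressed-CSP if moreover $V^\dagger AV=A_L\otimes A_J$; bare-CSP if also $A_J=\mathrm{Id}_J$. Supported on $R$: of the form $A_R\otimes\mathrm{Id}_{R^c}$. $R$ is correctable w.r.t. $S$ if every $A_L\in\mathcal{B}(\mathcal{H}_L)$ is implemented as $A_L\otimes\mathrm{Id}_J$ by a bare-CSP operator supported on $R^c$; dressed-cleanable w.r.t. $S$ if every Pauli $P_L$ on $\mathcal{H}_L$ is implemented as $P_L\otimes P_J$ (some $P_J$) by a dressed-CSP operator supported on $R^c$. Maximal entanglement wedge: $\mathcal{E}[R]$ is the set of $j$ such that $R^c$ is correctable w.r.t. $\{j\}$. $R$ obeys complementary recovery if $\mathcal{E}[R]\cup\mathcal{E}[R^c]=\{1,\dots,n_L\}$.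 *)

(* Defs.v *)
From HB Require Import structures.
From mathcomp Require Import all_boot all_order all_algebra all_field.
Set Implicit Arguments. Unset Strict Implicit. Unset Printing Implicit Defensive.
Import Order.TTheory GRing.Theory Num.Theory.
Local Open Scope ring_scope.

(* Complex scalars: algebraic complex numbers algC.
   An m-qubit Hilbert space is C^(2^m); basis index x : 'I_(2^m), with
   qubit q carrying bit  odd (x %/ 2^q). *)

Definition qbit (m : nat) (x : 'I_(2 ^ m)) (q : 'I_m) : bool := odd (x %/ 2 ^ q).

Definition mask (m : nat) (T : {set 'I_m}) (x : 'I_(2 ^ m)) : {ffun 'I_m -> bool} :=
  [ffun q => (q \in T) && qbit x q].

(* An operator on the qubits of T, given by its matrix entries on labels of T *)
Definition subop (m : nat) := {ffun 'I_m -> bool} -> {ffun 'I_m -> bool} -> algC.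

Definition id_op (m : nat) : subop m := fun u v => (u == v)%:R.

(* Pauli operator i^k X^a Z^b acting on the qubits of T *)
Definition pauli_op (m : nat) (T : {set 'I_m}) (k : nat) (a b : {ffun 'I_m -> bool})
  : subop m :=
  fun u v => 'i ^+ k *
    \prod_(q in T) ((u q == (v q (+) a q))%:R * (-1) ^+ (b q && v q)).

(* M = M_T (x) M_{T^c} with respect to the qubit partition T, T^c *)
Definition is_tensor (m : nat) (T : {set 'I_m}) (M : 'M[algC]_(2 ^ m))
    (fT fTc : subop m) : Prop :=
  forall x y : 'I_(2 ^ m),
    M x y = fT (mask T x) (mask T y) * fTc (mask (~: T) x) (mask (~: T) y).

Definition pauli_mx (m : nat) (k : nat) (a b : {ffun 'I_m -> bool}) : 'M[algC]_(2 ^ m) :=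
  \matrix_(x, y) pauli_op setT k a b (mask setT x) (mask setT y).

Definition is_pauli (m : nat) (M : 'M[algC]_(2 ^ m)) : Prop :=
  exists k a b, M = pauli_mx k a b.

Definition adj (p q : nat) (M : 'M[algC]_(p, q)) : 'M[algC]_(q, p) :=
  (map_mx (fun z => z^*) M)^T.

Definition stabilizer_group (n : nat) (G : 'M[algC]_(2 ^ n) -> Prop) : Prop :=
  (forall g, G g -> is_pauli g) /\
  [/\ G 1%:M,
      (forall g h, G g -> G h -> G (g *m h)),
      (forall g, G g -> G (adj g)),
      (forall g h, G g -> G h -> g *m h = h *m g)
    & ~ G (- 1%:M)].

(* V : C^(2^nL) -> C^(2^n) is an encoding isometry for the stabilizer code G:
   an isometry onto the code space (the +1 eigenspace of G), in a basis of the
   encoded qubits such that codespace-preserving physical Paulis implement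
   encoded Paulis. *)
Definition encoding (n nL : nat) (G : 'M[algC]_(2 ^ n) -> Prop)
    (V : 'M[algC]_(2 ^ n, 2 ^ nL)) : Prop :=
  [/\ adj V *m V = 1%:M,
      (forall v : 'cV[algC]_(2 ^ n),
          (forall g, G g -> g *m v = v) <-> exists w : 'cV[algC]_(2 ^ nL), v = V *m w)
    & (forall P : 'M[algC]_(2 ^ n), is_pauli P ->
          P *m (V *m adj V) = (V *m adj V) *m P -> is_pauli (adj V *m P *m V))].

Definition CSP (n nL : nat) (V : 'M[algC]_(2 ^ n, 2 ^ nL)) (A : 'M[algC]_(2 ^ n)) : Prop :=
  A *m (V *m adj V) = (V *m adj V) *m A.

Definition supported_on (n : nat) (R : {set 'I_n}) (A : 'M[algC]_(2 ^ n)) : Prop :=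
  exists AR : subop n, is_tensor R A AR (@id_op n).

Definition correctable (n nL : nat) (V : 'M[algC]_(2 ^ n, 2 ^ nL))
    (R : {set 'I_n}) (S : {set 'I_nL}) : Prop :=
  forall AL : subop nL, exists A : 'M[algC]_(2 ^ n),
    [/\ CSP V A, supported_on (~: R) A & is_tensor S (adj V *m A *m V) AL (@id_op nL)].

Definition dressed_cleanable (n nL : nat) (V : 'M[algC]_(2 ^ n, 2 ^ nL))
    (R : {set 'I_n}) (S : {set 'I_nL}) : Prop :=
  forall (k : nat) (a b : {ffun 'I_nL -> bool}),
  exists (kJ : nat) (aJ bJ : {ffun 'I_nL -> bool}) (A : 'M[algC]_(2 ^ n)),
    [/\ CSP V A, supported_on (~: R) A &
        is_tensor S (adj V *m A *m V) (pauli_op S k a b) (pauli_op (~: S) kJ aJ bJ)].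

Definition in_wedge (n nL : nat) (V : 'M[algC]_(2 ^ n, 2 ^ nL)) (R : {set 'I_n})
    (j : 'I_nL) : Prop :=
  correctable V (~: R) [set j].

Definition complementary_recovery (n nL : nat) (V : 'M[algC]_(2 ^ n, 2 ^ nL))
    (R : {set 'I_n}) : Prop :=
  forall j : 'I_nL, in_wedge V R j \/ in_wedge V (~: R) j.

(* Main.v *)
Require Import Defs.
From mathcomp Require Import all_boot all_order all_algebra all_field.
Set Implicit Arguments. Unset Strict Implicit. Unset Printing Implicit Defensive.
Import Order.TTheory GRing.Theory Num.Theory.
Local Open Scope ring_scope.
Local Notation mask := Defs.mask.

Lemma qbit_inj_nat (m : nat) : forall x y : nat, (x < 2 ^ m)%N -> (y < 2 ^ m)%N ->
  (forall q, (q < m)%N -> odd (x %/ 2 ^ q) = odd (y %/ 2 ^ q)) -> x = y.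
Proof.
elim: m => [|m IH] x y.
  by rewrite expn0 !ltnS !leqn0 => /eqP-> /eqP->.
move=> hx hy h.
rewrite -(odd_double_half x) -(odd_double_half y).
have h0 := h 0%N isT; rewrite !expn0 !divn1 in h0.
rewrite h0 (IH x./2 y./2) //.
- by rewrite -divn2 ltn_divLR // -expnSr.
- by rewrite -divn2 ltn_divLR // -expnSr.
move=> q hq; rewrite -!divn2 -!divnMA -expnS; exact: h.
Qed.

Definition bits (m : nat) (x : 'I_(2 ^ m)) : {ffun 'I_m -> bool} := [ffun q => qbit x q].

Lemma bits_inj m : injective (@bits m).
Proof.
move=> x y /ffunP h; apply/val_inj/(@qbit_inj_nat m) => [||q hq]; rewrite ?ltn_ord //.
by have := h (Ordinal hq); rewrite !ffunE.
Qed.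

Lemma bits_bij m : bijective (@bits m).
Proof.
apply: inj_card_bij; first exact: bits_inj.
by rewrite card_ffun !card_ord card_bool.
Qed.

Lemma bits_surj m (w : {ffun 'I_m -> bool}) : exists z, bits z = w.
Proof. case: (bits_bij m) => g _ gK; exists (g w); exact: gK. Qed.

Lemma maskE m (T : {set 'I_m}) x q : mask T x q = (q \in T) && qbit x q.
Proof. by rewrite ffunE. Qed.

Lemma mask_eqP m (T : {set 'I_m}) x y :
  reflect (forall q, q \in T -> qbit x q = qbit y q) (mask T x == mask T y).
Proof.
apply: (iffP eqP) => [h q qT|h].
  by have := congr1 (fun f : {ffun _ -> _} => f q) h; rewrite /= !maskE qT.
by apply/ffunP => q; rewrite !maskE; case: (boolP (q \in T)) => //= /h.
Qed.

Lemma split_eq m (T : {set 'I_m}) (x y : 'I_(2 ^ m)) :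
  (x == y) = (mask T x == mask T y) && (mask (~: T) x == mask (~: T) y).
Proof.
apply/eqP/andP => [->|[/mask_eqP h1 /mask_eqP h2]]; first by [].
apply: bits_inj; apply/ffunP => q; rewrite !ffunE.
by case: (boolP (q \in T)) => qT; [apply: h1|apply: h2; rewrite inE qT].
Qed.

Lemma qbit_bits m (z : 'I_(2 ^ m)) w q : bits z = w -> qbit z q = w q.
Proof. by move=> <-; rewrite ffunE. Qed.

Lemma tensor_mul_disj m (T1 T2 : {set 'I_m}) (M N : 'M[algC]_(2 ^ m)) f1 f2 :
  [disjoint T1 & T2] -> is_tensor T1 M f1 (@id_op m) -> is_tensor T2 N f2 (@id_op m) ->
  forall x y, (M *m N) x y = f1 (mask T1 x) (mask T1 y) * f2 (mask T2 x) (mask T2 y) *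
     (mask (~: (T1 :|: T2)) x == mask (~: (T1 :|: T2)) y)%:R.
Proof.
move=> dis hM hN x y; rewrite mxE.
under eq_bigr => z _ do rewrite hM hN /id_op.
pose w0 : {ffun 'I_m -> bool} := [ffun q => if q \in T1 then qbit y q else qbit x q].
have [z0 hz0] := bits_surj w0.
have z0E q : qbit z0 q = if q \in T1 then qbit y q else qbit x q.
  by rewrite (qbit_bits q hz0) ffunE.
have uniq z : mask (~: T1) x == mask (~: T1) z -> mask (~: T2) z == mask (~: T2) y ->
    z = z0.
  move=> /mask_eqP h1 /mask_eqP h2; apply: bits_inj; apply/ffunP => q.
  rewrite !ffunE z0E; case: (boolP (q \in T1)) => qT1.
    by apply: h2; rewrite inE (disjointFr dis qT1).
  by rewrite h1 // inE qT1.
case: (boolP (mask (~: (T1 :|: T2)) x == mask (~: (T1 :|: T2)) y)) => E.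
  move/mask_eqP: (E) => E'.
  rewrite (bigD1 z0) //= big1 ?addr0.
    have -> : mask (~: T1) x == mask (~: T1) z0.
      by apply/mask_eqP => q; rewrite inE z0E => /negbTE->.
    have -> : mask (~: T2) z0 == mask (~: T2) y.
      apply/mask_eqP => q; rewrite inE z0E => qT2.
      case: ifP => // qT1; apply: E'; by rewrite !inE qT1 (negbTE qT2).
    have -> : mask T1 z0 = mask T1 y.
      by apply/eqP/mask_eqP => q qT1; rewrite z0E qT1.
    have -> : mask T2 z0 = mask T2 x.
      by apply/eqP/mask_eqP => q qT2; rewrite z0E (disjointFl dis qT2).
    by rewrite !mulr1.
  move=> z zz0.
  case: (boolP (mask (~: T1) x == mask (~: T1) z)) => h1; last by rewrite mulr0 mul0r.
  case: (boolP (mask (~: T2) z == mask (~: T2) y)) => h2; last by rewrite !mulr0.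
  by rewrite (uniq z h1 h2) eqxx in zz0.
rewrite mulr0 big1 // => z _.
case: (boolP (mask (~: T1) x == mask (~: T1) z)) => /mask_eqP h1; last by rewrite mulr0 mul0r.
case: (boolP (mask (~: T2) z == mask (~: T2) y)) => /mask_eqP h2; last by rewrite !mulr0.
case/negP: E; apply/mask_eqP => q; rewrite !inE negb_or => /andP[q1 q2].
by rewrite h1 ?h2 // inE.
Qed.

Definition xorf m (u c : {ffun 'I_m -> bool}) : {ffun 'I_m -> bool} :=
  [ffun q => u q (+) c q].

Lemma xorfK m (c : {ffun 'I_m -> bool}) : involutive (fun u => @xorf m u c).
Proof. by move=> u; apply/ffunP => q; rewrite !ffunE addbK. Qed.

Definition zf m : {ffun 'I_m -> bool} := [ffun _ => false].

Lemma xorf_eq0 m (u c : {ffun 'I_m -> bool}) :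
  (xorf u c == [ffun _ => false]) = (u == c).
Proof.
rewrite -(inj_eq (inv_inj (xorfK c))) xorfK; congr (_ == _).
by apply/ffunP => q; rewrite !ffunE.
Qed.


Lemma xorf_eqc m (u c : {ffun 'I_m -> bool}) : (xorf u c == c) = (u == zf m).
Proof.
rewrite -(inj_eq (inv_inj (xorfK c))) xorfK; congr (_ == _).
by apply/ffunP => q; rewrite !ffunE addbb.
Qed.

Lemma tensor_mul_same m (T : {set 'I_m}) (M N : 'M[algC]_(2 ^ m)) f g :
  is_tensor T M f (@id_op m) -> is_tensor T N g (@id_op m) ->
  is_tensor T (M *m N) (fun u v => \sum_(z : 'I_(2 ^ m) | mask (~: T) z == zf m)
      f u (mask T z) * g (mask T z) v) (@id_op m).
Proof.
move=> hM hN x y; rewrite mxE /id_op.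
under eq_bigr => z _ do rewrite hM hN /id_op.
case: (boolP (mask (~: T) x == mask (~: T) y)) => E; last first.
  rewrite mulr0 big1 // => z _.
  case: (boolP (mask (~: T) x == mask (~: T) z)) => h1; last by rewrite mulr0 mul0r.
  case: (boolP (mask (~: T) z == mask (~: T) y)) => h2; last by rewrite !mulr0.
  by rewrite (eqP h1) h2 in E.
rewrite mulr1.
pose c := mask (~: T) x.
have [g0 g0K bK] := bits_bij m.
pose phi z := g0 (xorf (bits z) c).
have phiK : involutive phi.
  by move=> z; rewrite /phi bK xorfK g0K.
have phiE z q : qbit (phi z) q = qbit z q (+) c q.
  by rewrite (@qbit_bits _ _ (xorf (bits z) c)) ?bK // !ffunE.
rewrite (reindex phi) /=; last exact/onW_bij/inv_bij.
rewrite [RHS]big_mkcond /=; apply: eq_bigr => z _.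
have mT : mask T (phi z) = mask T z.
  apply/ffunP => q; rewrite !maskE phiE /c maskE inE.
  by case: (q \in T) => /=; rewrite ?addbF.
have mTc : mask (~: T) (phi z) = xorf (mask (~: T) z) c.
  apply/ffunP => q; rewrite !ffunE phiE /c maskE.
  by case: (q \in ~: T).
rewrite mT mTc -(eqP E) -/c eq_sym xorf_eqc.
case: (mask (~: T) z == zf m).
  by rewrite !mulr1.
by rewrite mulr0 mul0r.
Qed.

Section Ops.
Variables (n nL : nat) (V : 'M[algC]_(2 ^ n, 2 ^ nL)).
Hypothesis hVV : adj V *m V = 1%:M.

Lemma csp_mul A B : CSP V A -> CSP V B -> CSP V (A *m B).
Proof. by rewrite /CSP => hA hB; rewrite -mulmxA hB mulmxA hA -mulmxA. Qed.

Lemma csp_add A B : CSP V A -> CSP V B -> CSP V (A + B).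
Proof. by rewrite /CSP => hA hB; rewrite mulmxDl mulmxDr hA hB. Qed.

Lemma csp0 : CSP V 0.
Proof. by rewrite /CSP mul0mx mulmx0. Qed.

Lemma csp_scalar c : CSP V c%:M.
Proof. by rewrite /CSP mul_mx_scalar mul_scalar_mx. Qed.

Lemma impl_mul A B : CSP V B ->
  adj V *m (A *m B) *m V = (adj V *m A *m V) *m (adj V *m B *m V).
Proof.
move=> hB.
have BV : B *m V = V *m adj V *m B *m V.
  by rewrite -hB -!mulmxA hVV mulmx1.
by rewrite -mulmxA -(mulmxA A) BV !mulmxA.
Qed.

Lemma supp_add (T : {set 'I_n}) A B :
  supported_on T A -> supported_on T B -> supported_on T (A + B).
Proof.
move=> [f hf] [g hg]; exists (fun u v => f u v + g u v) => x y.
by rewrite mxE hf hg mulrDl.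
Qed.

Lemma supp0 (T : {set 'I_n}) : supported_on T 0.
Proof. by exists (fun _ _ => 0) => x y; rewrite mxE mul0r. Qed.

Lemma supp_mul (T : {set 'I_n}) A B :
  supported_on T A -> supported_on T B -> supported_on T (A *m B).
Proof. by move=> [f hf] [g hg]; eexists; apply: tensor_mul_same hf hg. Qed.

Lemma supp_scalar (T : {set 'I_n}) c : supported_on T c%:M.
Proof.
exists (fun u v => c * (u == v)%:R) => x y.
rewrite mxE (split_eq T) /id_op.
by case: (_ == _); case: (_ == _); rewrite /= ?mulr0 ?mulr1 ?mul0r.
Qed.

End Ops.

Lemma step1 (n nL : nat) (V : 'M[algC]_(2 ^ n, 2 ^ nL)) (R : {set 'I_n})
    (S : {set 'I_nL}) (j : 'I_nL) :
  adj V *m V = 1%:M -> j \in S -> dressed_cleanable V R S ->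
  correctable V (~: R) [set j] -> False.
Proof.
move=> hVV jS hDC hB.
have [kJ [aJ [bJ [A [cA [AR hAR] hA]]]]] :=
  hDC 0%N [ffun q => q == j] [ffun _ => false].
have [B [cB [BR hBR] hBt]] := hB (fun u v => (u == v)%:R * (-1) ^+ v j).
have comm : A *m B = B *m A.
  apply/matrixP => x y.
  rewrite (tensor_mul_disj _ hAR hBR) ?(tensor_mul_disj _ hBR hAR); last first.
  - by rewrite disjoints_subset ?setCK.
  - by rewrite disjoints_subset ?setCK.
  by rewrite setUC; congr (_ * _); rewrite mulrC.
pose M := adj V *m A *m V; pose N := adj V *m B *m V.
have MN : M *m N = N *m M by rewrite /M /N -!impl_mul // comm.
have Ndiag z y : N z y = (z == y)%:R * (-1) ^+ (qbit y j).
  rewrite /N hBt /id_op (split_eq [set j]) maskE set11 /=.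
  by case: (_ == _); case: (_ == _); rewrite /= ?mulr0 ?mulr1 ?mul0r ?mul1r.
pose xs : {ffun 'I_nL -> bool} := [ffun q => if q \in S then q == j else aJ q].
have [x hx] := bits_surj xs.
have [y hy] := bits_surj (zf nL).
have qx q : qbit x q = if q \in S then q == j else aJ q by rewrite (qbit_bits q hx) ffunE.
have qy q : qbit y q = false by rewrite (qbit_bits q hy) ffunE.
have := congr1 (fun P : 'M_(2 ^ nL) => P x y) MN; rewrite !mxE.
under eq_bigr => z _ do rewrite Ndiag.
under [in RHS]eq_bigr => z _ do rewrite Ndiag.
rewrite (bigD1 y) //= big1 ?addr0; last first.
  by move=> z /negbTE ->; rewrite mul0r mulr0.
rewrite [in RHS](bigD1 x) //= [in RHS]big1 ?addr0; last first.
  by move=> z; rewrite eq_sym => /negbTE ->; rewrite !mul0r.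
rewrite !eqxx qy qx jS eqxx expr0 expr1 !mul1r mulr1 => hM.
have M0 : M x y = 0.
  have : M x y *+ 2 == 0 by rewrite mulr2n {1}hM mulN1r addNr.
  by rewrite mulrn_eq0 /= => /eqP.
move: M0; rewrite /M hA /pauli_op expr0 mul1r big1; last first.
  move=> q qS; rewrite !maskE qS qx qy qS !ffunE /=.
  by case: (q == j); rewrite /= mul1r.
rewrite mul1r big1; last first.
  move=> q qS; rewrite !maskE qS qx qy /=.
  move: qS; rewrite inE => /negbTE ->.
  by case: (aJ q); rewrite /= andbF mul1r.
by rewrite mulr1 => /eqP; rewrite expf_eq0 (negbTE (neq0Ci _)) andbF.
Qed.

Lemma step2 (n nL : nat) (V : 'M[algC]_(2 ^ n, 2 ^ nL)) (R : {set 'I_n})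
    (S : {set 'I_nL}) :
  adj V *m V = 1%:M -> (forall j, j \in S -> correctable V R [set j]) ->
  forall s : seq 'I_nL, {subset s <= S} -> correctable V R [set x in s].
Proof.
move=> hVV hj; elim=> [|j s IH] hs.
  have -> : [set x in [::]] = set0 :> {set 'I_nL} by apply/setP => q; rewrite !inE.
  move=> AL; pose c := AL (zf nL) (zf nL).
  exists c%:M; split; [exact: csp_scalar | exact: supp_scalar |].
  have -> : adj V *m c%:M *m V = c%:M.
    by rewrite mul_mx_scalar -scalemxAl hVV scalemx1.
  move=> x y; rewrite mxE (split_eq set0) /id_op.
  have m0 z : mask set0 z = zf nL by apply/ffunP => q; rewrite maskE inE ffunE.
  by rewrite !m0 eqxx /= mulr_natr.
have IH' : correctable V R [set x in s].
  by apply: IH => q qs; apply: hs; rewrite inE qs orbT.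
case: (boolP (j \in s)) => js.
  have -> : [set x in j :: s] = [set x in s].
    by apply/setP => q; rewrite !inE; case: eqP => // ->.
  exact: IH'.
have jS : j \in S by apply: hs; rewrite inE eqxx.
set T := [set x in s] in IH' *.
have -> : [set x in j :: s] = T :|: [set j].
  by apply/setP => q; rewrite !inE orbC.
have dis : [disjoint T & [set j]].
  by rewrite disjoint_sym disjoints1 inE.
move=> AL.
pose ALbc (p : bool * bool) : subop nL := fun u v =>
  AL [ffun q => if q == j then p.1 else u q] [ffun q => if q == j then p.2 else v q].
pose E (p : bool * bool) : subop nL := fun u v => (u j == p.1)%:R * (v j == p.2)%:R.
have [Af hAf] := fin_all_exists (fun p => IH' (ALbc p)).
have [Bf hBf] := fin_all_exists (fun p => hj j jS (E p)).
exists (\sum_p Af p *m Bf p); split.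
- apply: (big_ind (CSP V)); [exact: csp0 | exact: csp_add |].
  by move=> p _; case: (hAf p) => ? _ _; case: (hBf p) => ? _ _; apply: csp_mul.
- apply: (big_ind (supported_on (~: R))); [exact: supp0 | exact: supp_add |].
  by move=> p _; case: (hAf p) => _ ? _; case: (hBf p) => _ ? _; apply: supp_mul.
move=> x y.
rewrite mulmx_sumr mulmx_suml summxE.
under eq_bigr => p _.
  case: (hBf p) => cB _ _; rewrite impl_mul //.
  case: (hAf p) => _ _ tA; case: (hBf p) => _ _ tB.
  rewrite (tensor_mul_disj dis tA tB).
over.
rewrite -big_distrl /=; congr (_ * _).
rewrite -(pair_big xpredT xpredT (fun b c => ALbc (b, c) (mask T x) (mask T y) *
   E (b, c) (mask [set j] x) (mask [set j] y))) /=.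
rewrite !big_bool /E /ALbc /= !maskE set11 /=.
have U z : [ffun q => if q == j then qbit z j else mask T z q] = mask (T :|: [set j]) z.
  apply/ffunP => q; rewrite !ffunE !inE.
  by case: eqP => [->|_]; rewrite ?orbT ?orbF.
rewrite -!U.
by case: (qbit x j); case: (qbit y j); rewrite /= ?mulr1 ?mulr0 ?addr0 ?add0r.
Qed.

Theorem lemma6 (n nL : nat) (G : 'M[algC]_(2 ^ n) -> Prop)
    (V : 'M[algC]_(2 ^ n, 2 ^ nL)) (S : {set 'I_nL}) (R : {set 'I_n}) :
  stabilizer_group G -> encoding G V ->
  complementary_recovery V R -> dressed_cleanable V R S ->
  correctable V R S.
Proof.
move=> _ [hVV _ _] hCR hDC.
have hj : forall j, j \in S -> correctable V R [set j].
  move=> j jS; case: (hCR j) => h; last by rewrite /in_wedge setCK in h.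
  by case: (step1 hVV jS hDC h).
rewrite -(set_enum S); apply: (step2 hVV hj) => q; by rewrite mem_enum.
Qed.
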